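(* Any two of the following three equalities imply the third: (i) $c_{n,k}=\prod_{j=k}^{n-1}\frac{g_{j+1}}{h_n-h_j}$ for $0\le k<n$ and $c_{n,n}=1$; (ii) $Lu_n=h_nu_n$ for all $n\ge0$; (iii) $Lv_n=h_nv_n+g_nv_{n-1}$ for $n>0$ and $Lv_0=h_0v_0$.
   Context: Let $h_k$, $x_k$, $g_k$ ($k=0,1,2,\ldots$) be given sequences such that all $h_k$ are distinct. Define monic Newton type polynomials $v_k(x)=(x-x_0)(x-x_1)\cdots(x-x_{k-1})$ for $k\ge1$ and $v_0(x)=1$. Let $u_n(x)=\sum_{k=0}^n c_{n,k}\,v_k(x)$ be monic polynomials of degree $n$ (so $c_{n,n}=1$), and let $L$ be a linear operator on the space of polynomials. *)

(* Defs.v *)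
From HB Require Import structures.
From mathcomp Require Import all_boot all_order all_algebra.
Set Implicit Arguments. Unset Strict Implicit. Unset Printing Implicit Defensive.
Import GRing.Theory.
Local Open Scope ring_scope.

Definition vpoly (R : fieldType) (x : nat -> R) (k : nat) : {poly R} :=
  \prod_(i < k) ('X - (x i)%:P).

Definition upoly (R : fieldType) (c : nat -> nat -> R) (x : nat -> R) (n : nat)
  : {poly R} := \sum_(k < n.+1) c n k *: vpoly x k.

(* Main.v *)
Require Import Defs.
From HB Require Import structures.
From mathcomp Require Import all_boot all_order all_algebra.
From mathcomp Require Import ring.
Set Implicit Arguments. Unset Strict Implicit.
Import GRing.Theory.
Local Open Scope ring_scope.

Lemma size_enum_I k : size (index_enum 'I_k) = k.
Proof. by rewrite -[RHS]card_ord cardT enumT. Qed.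

Lemma size_vpoly (R : fieldType) (x : nat -> R) k : size (vpoly x k) = k.+1.
Proof. by rewrite /vpoly size_prod_XsubC size_enum_I. Qed.

Lemma coef_vpoly_top (R : fieldType) (x : nat -> R) k : (vpoly x k)`_k = 1.
Proof.
have : vpoly x k \is monic by apply: monic_prod_XsubC.
by move/monicP; rewrite /lead_coef size_vpoly.
Qed.

Lemma vpoly_indep (R : fieldType) (x : nat -> R) n (a : nat -> R) :
  \sum_(k < n) a k *: vpoly x k = 0 -> forall k, (k < n)%N -> a k = 0.
Proof.
elim: n => [|n IH] //= H k Hk.
move: H; rewrite big_ord_recr /= => H.
have an : a n = 0.
  have := congr1 (fun p : {poly R} => p`_n) H.
  rewrite coefD coef_sum coefZ coef_vpoly_top mulr1 coef0 big1 ?add0r //.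
  move=> i _; rewrite coefZ nth_default ?mulr0 // size_vpoly; exact: ltn_ord.
move: H; rewrite an scale0r addr0 => H.
case: (ltnP k n) => [Hkn|Hnk]; first exact: IH.
by have -> : k = n by apply/eqP; rewrite eqn_leq Hnk -ltnS Hk.
Qed.

Definition wv (R : fieldType) (g x : nat -> R) k : {poly R} :=
  if k is m.+1 then g k *: vpoly x m else 0.
Definition Ev (R : fieldType) (L : {linear {poly R} -> {poly R}}) (h g x : nat -> R) k :=
  L (vpoly x k) - h k *: vpoly x k - wv g x k.
Definition dd (R : fieldType) (h g : nat -> R) (c : nat -> nat -> R) n k :=
  c n k * (h n - h k) - c n k.+1 * g k.+1.

Lemma key (R : fieldType) (h x g : nat -> R) (c : nat -> nat -> R)
  (L : {linear {poly R} -> {poly R}}) n :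
  L (upoly c x n) - h n *: upoly c x n =
  \sum_(k < n.+1) c n k *: Ev L h g x k - \sum_(k < n) dd h g c n k *: vpoly x k.
Proof.
rewrite /upoly linear_sum /= scaler_sumr.
have E1 : forall k : 'I_n.+1, L (c n k *: vpoly x k) =
   c n k *: Ev L h g x k + ((c n k * h k) *: vpoly x k + c n k *: wv g x k).
  move=> k; rewrite linearZ /= -scalerA -!scalerDr /Ev; congr (_ *: _).
  ring.
rewrite (eq_bigr _ (fun k _ => E1 k)) !big_split /=.
have C : \sum_(k < n.+1) c n k *: wv g x k =
   \sum_(k < n) (c n k.+1 * g k.+1) *: vpoly x k.
  rewrite big_ord_recl /= scaler0 add0r; apply: eq_bigr => i _.
  by rewrite /bump /= add1n scalerA.
have B : \sum_(k < n.+1) (c n k * h k) *: vpoly x k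
       - \sum_(k < n.+1) h n *: (c n k *: vpoly x k) =
   \sum_(k < n) (c n k * (h k - h n)) *: vpoly x k.
  rewrite -sumrB big_ord_recr /= scalerA [h n * _]mulrC subrr addr0; apply: eq_bigr => i _.
  by rewrite scalerA -scalerBl mulrBr [h n * _]mulrC.
rewrite C.
set S1 := \sum_(k < n.+1) _ *: Ev _ _ _ _ _.
set A := \sum_(k < n.+1) (c n k * h k) *: vpoly x k.
set D := \sum_(k < n.+1) h n *: (c n k *: vpoly x k).
have -> : S1 + (A + \sum_(k < n) (c n k.+1 * g k.+1) *: vpoly x k) - D
   = S1 + ((A - D) + \sum_(k < n) (c n k.+1 * g k.+1) *: vpoly x k).
  by ring.
rewrite B -big_split /= -sumrN; congr (_ + _); apply: eq_bigr => i _.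
by rewrite -scalerDl -scaleNr /dd; congr (_ *: _); ring.
Qed.

Lemma P1_dd (R : fieldType) (h g : nat -> R) (c : nat -> nat -> R)
  (h_inj : injective h) (c_monic : forall n : nat, c n n = 1) :
  (forall n k : nat, (k < n)%N ->
              c n k = \prod_(k <= j < n) (g j.+1 / (h n - h j))) ->
  forall n k, (k < n)%N -> dd h g c n k = 0.
Proof.
move=> P1 n k Hk.
have hnk : h n - h k != 0.
  rewrite subr_eq0; apply/eqP => /h_inj E; by rewrite E ltnn in Hk.
have Hk1 : c n k.+1 = \prod_(k.+1 <= j < n) (g j.+1 / (h n - h j)).
  case: (ltnP k.+1 n) => [H|H]; first exact: P1.
  have -> : k.+1 = n by apply/eqP; rewrite eqn_leq H Hk.
  by rewrite big_geq ?c_monic.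
rewrite /dd (P1 _ _ Hk) big_ltn // -Hk1.
by rewrite mulrAC divfK // mulrC subrr.
Qed.

Lemma dd_P1 (R : fieldType) (h g : nat -> R) (c : nat -> nat -> R)
  (h_inj : injective h) (c_monic : forall n : nat, c n n = 1) :
  (forall n k, (k < n)%N -> dd h g c n k = 0) ->
  forall n k : nat, (k < n)%N ->
              c n k = \prod_(k <= j < n) (g j.+1 / (h n - h j)).
Proof.
move=> D n.
suff S : forall d k, (k + d)%N = n -> c n k = \prod_(k <= j < n) (g j.+1 / (h n - h j)).
  move=> k Hk; apply: (S (n - k)%N); by rewrite subnKC // ltnW.
elim=> [|d IH] k E.
  by rewrite addn0 in E; rewrite E big_geq ?c_monic.
have Hk : (k < n)%N by rewrite -E addnS ltnS leq_addr.
have hnk : h n - h k != 0.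
  rewrite subr_eq0; apply/eqP => /h_inj E'; by rewrite E' ltnn in Hk.
rewrite big_ltn // -IH; last by rewrite addSnnS.
have := D n k Hk; rewrite /dd => /eqP; rewrite subr_eq0 => /eqP H.
apply: (mulIf hnk); by rewrite H mulrAC divfK // mulrC.
Qed.

Lemma P3_Ev (R : fieldType) (h x g : nat -> R) (L : {linear {poly R} -> {poly R}}) :
  ((forall n : nat, (0 < n)%N ->
               L (vpoly x n) = h n *: vpoly x n + g n *: vpoly x n.-1)
            /\ L (vpoly x 0) = h 0%N *: vpoly x 0) ->
  forall k, Ev L h g x k = 0.
Proof.
case=> H H0 [|m]; rewrite /Ev /wv.
  by rewrite H0 subrr subr0.
rewrite H //=; ring.
Qed.

Lemma Ev_P3 (R : fieldType) (h x g : nat -> R) (L : {linear {poly R} -> {poly R}}) :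
  (forall k, Ev L h g x k = 0) ->
  ((forall n : nat, (0 < n)%N ->
               L (vpoly x n) = h n *: vpoly x n + g n *: vpoly x n.-1)
            /\ L (vpoly x 0) = h 0%N *: vpoly x 0).
Proof.
move=> E; split.
  case=> [//|m] _; have := E m.+1; rewrite /Ev /wv /= => /eqP.
  by rewrite subr_eq0 subr_eq => /eqP ->; rewrite addrC.
have := E 0%N; rewrite /Ev /wv /= subr0 => /eqP.
by rewrite subr_eq0 => /eqP.
Qed.

Unset Implicit Arguments.
Set Strict Implicit.
Theorem mainTheorem1 (R : fieldType) (h x g : nat -> R) (c : nat -> nat -> R)
  (L : {linear {poly R} -> {poly R}})
  (h_inj : injective h)
  (c_monic : forall n : nat, c n n = 1) :
  let P1 := forall n k : nat, (k < n)%N ->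
              c n k = \prod_(k <= j < n) (g j.+1 / (h n - h j)) in
  let P2 := forall n : nat, L (upoly c x n) = h n *: upoly c x n in
  let P3 := (forall n : nat, (0 < n)%N ->
               L (vpoly x n) = h n *: vpoly x n + g n *: vpoly x n.-1)
            /\ L (vpoly x 0) = h 0%N *: vpoly x 0 in
  (P1 -> P2 -> P3) /\ (P1 -> P3 -> P2) /\ (P2 -> P3 -> P1).
Proof.
move=> P1 P2 P3; split; [|split].
- move=> H1 H2; apply: (Ev_P3 (g:=g)).
  have D := P1_dd h_inj c_monic H1.
  have S : forall n, \sum_(k < n.+1) c n k *: Ev L h g x k = 0.
    move=> n; have := key h x g c L n.
    have Z : \sum_(k<n) dd h g c n k *: vpoly x k = 0.
      by rewrite big1 // => i _; rewrite D ?scale0r.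
    by rewrite H2 subrr Z subr0.
  elim/ltn_ind => n IH.
  have := S n; rewrite big_ord_recr /= c_monic scale1r big1 ?add0r //.
  by move=> i _; rewrite IH ?scaler0.
- move=> H1 H3 n; apply/eqP; rewrite -subr_eq0; apply/eqP.
  have D := P1_dd h_inj c_monic H1.
  have Z : \sum_(k<n) dd h g c n k *: vpoly x k = 0.
    by rewrite big1 // => i _; rewrite D ?scale0r.
  rewrite (key h x g c L n) Z subr0 big1 // => i _.
  by rewrite P3_Ev ?scaler0.
- move=> H2 H3; apply: dd_P1 => // n.
  apply: (@vpoly_indep _ x).
  have := key h x g c L n.
  rewrite H2 subrr big1 ?sub0r; last by move=> i _; rewrite P3_Ev ?scaler0.
  by move/esym/eqP; rewrite oppr_eq0 => /eqP.
Qed.
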